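(* Let $(X,d_X,m_X)$, $(Y,d_Y,m_Y)$ be metric measure spaces and $p:X\to Y$ a 1-Lipschitz map with $p_*m_X=m_Y$, and let $\{\mu_y\}_{y\in Y}$ be a disintegration of $m_X$ for $p$. Assume there is a Borel set $\Omega\subset Y$ with $m_Y(Y\setminus\Omega)=0$ such that $W_2(\mu_y,\mu_{y'})=d_Y(y,y')$ for all $y,y'\in\Omega$. Let $y_0,y_1\in Y$ satisfy $W_2(\mu_{y_0},\mu_{y_1})=d_Y(y_0,y_1)$ and $p_*\mu_{y_i}=\delta_{y_i}$ for $i=0,1$. Then every optimal transport plan for $W_2(\mu_{y_0},\mu_{y_1})$ is concentrated on $\{(x,x')\in p^{-1}(y_0)\times p^{-1}(y_1): d_X(x,x')=d_Y(y_0,y_1)\}$.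
   Context: A metric measure space $(X,d,m)$: complete separable metric space with Borel measure satisfying $0<m(B_r(x))<\infty$ for all $x$, $r>0$. A disintegration of $m_X$ for $p$ is a family $\{\mu_y\}_{y\in Y}$ of Borel probability measures on $X$ such that $y\mapsto\mu_y(A)$ is Borel for all Borel $A$, $\mu_y(X\setminus p^{-1}(y))=0$ for $m_Y$-a.e. $y$, and $\int_Xf\,dm_X=\int_Y\int_Xf\,d\mu_y\,dm_Y(y)$ for every Borel $f:X\to[0,\infty]$. $W_2$ is the quadratic Wasserstein distance (possibly $+\infty$). *)

(* Defs.v *)
From HB Require Import structures.
From mathcomp Require Import all_boot all_order all_algebra.
From mathcomp Require Import all_classical all_reals all_analysis.
From mathcomp Require Import measurable_realfun.
Set Implicit Arguments. Unset Strict Implicit. Unset Printing Implicit Defensive.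
Import Order.TTheory GRing.Theory Num.Theory.
Local Open Scope classical_set_scope.
Local Open Scope ring_scope.

Section MetricDefs.
Context {R : realType} {T : Type}.
Variable d : T -> T -> R.

Definition is_metric : Prop :=
  [/\ forall x y, 0 <= d x y,
      forall x y, d x y = 0 <-> x = y,
      forall x y, d x y = d y x &
      forall x y z, d x z <= d x y + d y z].

Definition dball (x : T) (r : R) : set T := [set y | d x y < r].

Definition dopen (A : set T) : Prop :=
  forall x, A x -> exists2 r : R, 0 < r & dball x r `<=` A.

Definition dcauchy (u : nat -> T) : Prop :=
  forall e : R, 0 < e -> exists N, forall n m, (N <= n)%N -> (N <= m)%N -> d (u n) (u m) < e.

Definition dcomplete : Prop :=
  forall u, dcauchy u -> exists l, forall e : R, 0 < e ->
     exists N, forall n, (N <= n)%N -> d (u n) l < e.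

Definition dseparable : Prop :=
  exists D : set T, countable D /\
    forall x (e : R), 0 < e -> exists2 z, D z & d x z < e.

Definition complete_separable_metric : Prop :=
  [/\ is_metric, dcomplete & dseparable].
End MetricDefs.

Notation borelT d := (g_sigma_algebraType (dopen d)).

Local Open Scope ereal_scope.

Definition mm_space {R : realType} {T : pointedType} (d : T -> T -> R)
  (m : {measure set (borelT d) -> \bar R}) : Prop :=
  complete_separable_metric d /\
  forall (x : borelT d) (r : R), (0 < r)%R ->
    0 < m (dball d x r) /\ m (dball d x r) < +oo.

Section Wasserstein.
Context {R : realType} {T : pointedType} (d : T -> T -> R).
Let X := borelT d.

Definition coupling (mu nu : {measure set X -> \bar R})
    (pi : probability (X * X)%type R) : Prop :=
  forall A : set X, measurable A ->
    pi (A `*` setT) = mu A /\ pi (setT `*` A) = nu A.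

Definition W2cost (mu nu : {measure set X -> \bar R})
    (pi : probability (X * X)%type R) : \bar R :=
  \int[pi]_z ((d z.1 z.2) ^+ 2)%:E.

(* inf of the quadratic cost over all couplings (+oo if there is none) *)
Definition W2sq (mu nu : {measure set X -> \bar R}) : \bar R :=
  ereal_inf [set W2cost mu nu pi | pi in [set pi | coupling mu nu pi]].

Definition W2 (mu nu : {measure set X -> \bar R}) : \bar R :=
  match W2sq mu nu with
  | r%:E => (Num.sqrt r)%:E
  | +oo => +oo
  | -oo => -oo (* impossible: the cost is nonnegative *)
  end.

Definition optimal_plan (mu nu : {measure set X -> \bar R})
    (pi : probability (X * X)%type R) : Prop :=
  coupling mu nu pi /\ W2cost mu nu pi = W2sq mu nu.

Definition concentrated_on (pi : probability (X * X)%type R)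
    (S : set (X * X)) : Prop :=
  exists N, [/\ measurable N, pi N = 0 & ~` S `<=` N].
End Wasserstein.

Definition disintegration {R : realType} {TX TY : pointedType}
  (dX : TX -> TX -> R) (dY : TY -> TY -> R)
  (mX : {measure set (borelT dX) -> \bar R})
  (mY : {measure set (borelT dY) -> \bar R})
  (p : borelT dX -> borelT dY) (mu : borelT dY -> probability (borelT dX) R)
  : Prop :=
  [/\ forall A : set (borelT dX), measurable A ->
        @measurable_fun _ _ (borelT dY) (\bar R) setT (fun y => mu y A),
      {ae mY, forall y, mu y (~` (p @^-1` [set y])) = 0} &
      forall f : borelT dX -> \bar R, measurable_fun setT f ->
        (forall x, 0 <= f x) ->
        \int[mX]_x f x = \int[mY]_y (\int[mu y]_x f x)].

(* Main.v *)
Require Import Defs.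
From HB Require Import structures.
From mathcomp Require Import all_boot all_order all_algebra.
From mathcomp Require Import all_classical all_reals all_analysis.
From mathcomp Require Import measurable_realfun lra.
Import Order.TTheory GRing.Theory Num.Theory.
Local Open Scope classical_set_scope.
Local Open Scope ring_scope.

Lemma dist_measC {R : realType} {T : pointedType} {d : T -> T -> R} (c : T) :
  is_metric d -> measurable_fun [set: borelT d] (fun x => d x c).
Proof.
move=> [d0 dE dC dT].
apply: (measurability _ (RGenInftyO.measurableE R)); rewrite ?setTI => //.
move=> _ [_ [a ->] <-]; apply: sub_sigma_algebra; rewrite setTI.
move=> x /=; rewrite in_itv /= => xa.
exists (a - d x c); first by rewrite subr_gt0.
move=> y; rewrite /dball /= => xy; rewrite in_itv /=.
have := dT y x c; rewrite (dC y x); lra.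
Qed.

Lemma dist_meas {R : realType} {T : pointedType} {d : T -> T -> R} :
  is_metric d -> dseparable d ->
  measurable_fun [set: (borelT d * borelT d)%type] (fun z => d z.1 z.2).
Proof.
move=> dm [D [cD dD]]; have [d0 dE dC dT] := dm.
have [e he] : exists e : nat -> T, forall x eps, 0 < eps -> exists n, d x (e n) < eps.
  have /pcard_surjP [g sg] := cD.
  exists g => x eps eps0; have [z Dz xz] := dD x eps eps0.
  by have [n _ gn] := sg z Dz; exists n; rewrite gn.
have mc c : measurable_fun [set: borelT d] (fun x => d c x).
  rewrite (_ : (fun x => d c x) = (fun x => d x c)); first exact: dist_measC c dm.
  by apply: funext => x; rewrite dC.
apply: (measurability _ (RGenInftyO.measurableE R)); rewrite ?setTI => //.
move=> _ [_ [a ->] <-]; rewrite setTI.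
rewrite (_ : _ @^-1` _ = \bigcup_n ((fun z : (borelT d * borelT d)%type => d z.1 (e n) + d (e n) z.2) @^-1` `]-oo, a[)).
  apply: bigcupT_measurable => n; rewrite -[X in measurable X]setTI.
  have mf : measurable_fun [set: (borelT d * borelT d)%type]
      (fun z : (borelT d * borelT d)%type => d z.1 (e n) + d (e n) z.2).
    apply: measurable_funD.
    - exact: (measurableT_comp (dist_measC (e n) dm) measurable_fst).
    - exact: (measurableT_comp (f := fun x : borelT d => d (e n) x) (g := snd) (mc (e n)) measurable_snd).
  exact: mf measurableT _ (measurable_itv _).
apply/seteqP; split => [[x1 x2] /=|[x1 x2] [n _] /=]; rewrite !in_itv /= => h.
  have [n hn] := he x2 ((a - d x1 x2) / 2) ltac:(lra).
  exists n => //=; rewrite in_itv /=.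
  have := dT x1 x2 (e n); have := dC x2 (e n); lra.
have := dT x1 (e n) x2; lra.
Qed.

Lemma singleton_meas {R : realType} {T : pointedType} {d : T -> T -> R} (y : borelT d) :
  is_metric d -> measurable [set y].
Proof.
move=> [d0 dE dC dT].
rewrite -[X in measurable X]setCK; apply: measurableC; apply: sub_sigma_algebra.
move=> x /= xy; exists (d x y).
  by rewrite lt_neqAle d0 andbT eq_sym; apply/eqP => /dE.
move=> z /=; rewrite /dball /= => xz zy; rewrite zy in xz; by rewrite ltxx in xz.
Qed.

Theorem proposition3p10 (R : realType) (TX TY : pointedType)
  (dX : TX -> TX -> R) (dY : TY -> TY -> R)
  (mX : {measure set (borelT dX) -> \bar R})
  (mY : {measure set (borelT dY) -> \bar R})
  (p : borelT dX -> borelT dY)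
  (mu : borelT dY -> probability (borelT dX) R)
  (Omega : set (borelT dY)) (y0 y1 : borelT dY) :
  mm_space mX -> mm_space mY ->
  (forall x x', dY (p x) (p x') <= dX x x') ->
  (forall B : set (borelT dY), measurable B -> mY B = mX (p @^-1` B)) ->
  disintegration mX mY p mu ->
  measurable Omega -> mY (~` Omega) = 0%E ->
  (forall y y', Omega y -> Omega y' -> W2 (mu y) (mu y') = (dY y y')%:E) ->
  W2 (mu y0) (mu y1) = (dY y0 y1)%:E ->
  (forall B : set (borelT dY), measurable B -> mu y0 (p @^-1` B) = \d_y0 B) ->
  (forall B : set (borelT dY), measurable B -> mu y1 (p @^-1` B) = \d_y1 B) ->
  forall pi : probability (borelT dX * borelT dX)%type R,
    optimal_plan (mu y0) (mu y1) pi ->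
    concentrated_on pi
      [set z | p z.1 = y0 /\ p z.2 = y1 /\ dX z.1 z.2 = dY y0 y1].
Proof.
move=> [[mXm _ sepX] _] [[mYm _ _] _] Lip push dis mOm nOm WOm W01 py0 py1 pi [cpl opt].
have [dY0 dYE dYC dYT] := mYm.
have [dX0 dXE dXC dXT] := mXm.
have mp : measurable_fun setT p.
  have hm : @measurable _ (borelT dY) = <<s dopen dY>> by [].
  apply: (measurability _ hm).
  move=> _ [A oA <-]; apply: sub_sigma_algebra; rewrite setTI.
  move=> x /= Apx; have [r r0 hr] := oA _ Apx; exists r => // z /= xz.
  by apply: hr; rewrite /dball /=; exact: le_lt_trans (Lip x z) xz.
have mS y : measurable (p @^-1` [set y]).
  by rewrite -[X in measurable X]setTI; exact: mp measurableT _ (singleton_meas y mYm).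
have ae1 : {ae pi, forall z, p z.1 = y0}.
  exists (~` (p @^-1` [set y0] `*` setT)); split.
  - by apply: measurableC; apply: measurableX.
  - rewrite probability_setC; last by apply: measurableX.
    have [-> _] := cpl _ (mS y0).
    have h := py0 _ (singleton_meas y0 mYm); apply: eq_trans (congr1 (fun m => (1 - m)%E) h) _; rewrite diracE mem_set //=.
    by rewrite -EFinD subrr.
  - by move=> [z1 z2] /= h [h1 _]; exact: h h1.
have ae2 : {ae pi, forall z, p z.2 = y1}.
  exists (~` (setT `*` p @^-1` [set y1])); split.
  - by apply: measurableC; apply: measurableX.
  - rewrite probability_setC; last by apply: measurableX.
    have [_ ->] := cpl _ (mS y1).
    have h := py1 _ (singleton_meas y1 mYm); apply: eq_trans (congr1 (fun m => (1 - m)%E) h) _; rewrite diracE mem_set //=.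
    by rewrite -EFinD subrr.
  - by move=> [z1 z2] /= h [_ h1]; exact: h h1.

set Dd := dY y0 y1.
have Dd0 : 0 <= Dd by exact: dY0.
set g := fun z : (borelT dX * borelT dX)%type => (dX z.1 z.2) ^+ 2.
have mg : measurable_fun setT g.
  by rewrite /g; apply: measurable_funX; exact: (dist_meas mXm sepX).
have Ieq : (\int[pi]_z (g z)%:E = (Dd ^+ 2)%:E)%E.
  have cost0 : (0 <= \int[pi]_z (g z)%:E)%E.
    by apply: integral_ge0 => z _; rewrite lee_fin sqr_ge0.
  move: W01; rewrite /W2 -opt /W2cost -/g.
  case E: (\int[pi]_z (g z)%:E)%E cost0 => [r| |] //; rewrite lee_fin => r0 [].
  by rewrite -/Dd => <-; rewrite sqr_sqrtr.
have aege : {ae pi, forall z, Dd ^+ 2 <= g z}.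
  apply: filterS2 ae1 ae2 => z h1 h2.
  have := Lip z.1 z.2; rewrite h1 h2 -/Dd => h.
  by rewrite /g; apply: lerXn2r; rewrite ?nnegrE.
have ae3 : {ae pi, forall z, g z = Dd ^+ 2}.
  pose f := fun z => ((g z - Dd ^+ 2)%:E)%E.
  have mf : measurable_fun setT f.
    by apply/measurable_EFinP; apply: measurable_funB.
  have maf : measurable_fun setT (fun z => `|f z|%E).
    by apply: (measurableT_comp _ mf); exact: abse_measurable.
  have e1 : (\int[pi]_z (g z)%:E = \int[pi]_z (`|f z| + (Dd ^+ 2)%:E))%E.
    apply: ae_eq_integral => //.
    - by apply/measurable_EFinP.
    - by apply: emeasurable_funD.
    - apply: filterS aege => z h _; rewrite /f /= ger0_norm ?subr_ge0 //.
      by rewrite -EFinD subrK.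
  rewrite ge0_integralD // in e1; last first.
    all: try by move=> z _; rewrite ?lee_fin ?sqr_ge0 ?abse_ge0.
  have hp := probability_setT pi.
  rewrite (integral_cst pi measurableT (Dd ^+ 2)%:E) in e1.
  move: e1; set m := (X in (_ * X)%E).
  have -> : m = 1%E by exact: hp.
  rewrite mule1 Ieq => e1.
  have i0 : (\int[pi]_z `|f z| = 0)%E.
    have : (0 <= \int[pi]_z `|f z|)%E by apply: integral_ge0 => z _; exact: abse_ge0.
    move: e1; case: (\int[pi]_z `|f z|)%E => [r| |] //.
    by rewrite -EFinD => -[] h _; congr EFin; lra.
  have := (ae_eq_integral_abs pi measurableT mf).1 i0.
  apply: filterS => z /(_ I) /eqP; rewrite /f eqe subr_eq0 => /eqP //.
have : {ae pi, forall z, p z.1 = y0 /\ p z.2 = y1 /\ dX z.1 z.2 = Dd}.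
  apply: filterS3 ae1 ae2 ae3 => z h1 h2 h3; split => //; split => //.
  apply/eqP; rewrite -(@eqrXn2 _ 2) //; first by apply/eqP.
move=> [N [mN pN sN]]; exists N; split => //.
Qed.
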